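(* If $\mathcal{O}$ is a decomposable set of upwards closed modalities, then for all sets $X,Y$ and relations $R\subseteq X\times Y$: (1) $x\,R\,y$ implies $\eta(x)\,\mathcal{O}(R)\,\eta(y)$; (2) for $t\in TTX$, $r\in TTY$, $t\,\mathcal{O}(\mathcal{O}(R))\,r$ implies $\mu t\,\mathcal{O}(R)\,\mu r$.
   Context: $\Sigma$ is a signature of effect operations with arities $\alpha^n\to\alpha$, $\mathbf{N}\times\alpha^n\to\alpha$, $\alpha^{\mathbf{N}}\to\alpha$ or $\mathbf{N}\times\alpha^{\mathbf{N}}\to\alpha$. $TX$ is the set of possibly infinite labelled trees with leaves $\bot$ or elements of $X$ and internal nodes labelled by operations (or $\sigma_m$, $m\in\mathbb{N}$) with children according to arity; $t\le t'$ iff $t$ is obtained from $t'$ by replacing subtrees with $\bot$. $\eta(x)$ is the leaf $x$; $\mu:TTX\to TX$ replaces each leaf of a tree of trees by that tree. $\mathbf{1}=\{*\}$. A set $\mathcal{O}$ of modalities is given with $[\![o]\!]\subseteq T\mathbf{1}$; upwards closed means $[\![o]\!]$ upward closed under $\le$. $t[\in P]\in T\mathbf{1}$ replaces leaves in $P$ by $*$ and other $X$-leaves by $\bot$; $o(A)=\{t\in TX\mid t[\in A]\in[\![o]\!]\}$. $R[A]=\{y\mid\exists x\in A,\ xRy\}$; $\mathcal{O}$-relator: $t\,\mathcal{O}(R)\,t'$ iff $\forall A\subseteq X\ \forall o\in\mathcal{O}$, $t\in o(A)\Rightarrow t'\in o(R[A])$. $\mathcal{T}$ is the least class of formulas containing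 $o(\top),o(\bot)$ closed under arbitrary $\bigvee,\bigwedge$, with $[\![o(\top)]\!]=o(\{*\})$, $[\![o(\bot)]\!]=o(\emptyset)$, unions/intersections; $t\trianglelefteq t'$ on $T\mathbf{1}$ iff $\forall\Phi\in\mathcal{T}$, $t\in[\![\Phi]\!]\Rightarrow t'\in[\![\Phi]\!]$; $r\preccurlyeq r'$ on $TT\mathbf{1}$ iff $\forall o\,\forall\Phi\in\mathcal{T}$, $r\in o([\![\Phi]\!])\Rightarrow r'\in o([\![\Phi]\!])$. $\mathcal{O}$ is decomposable if $r\preccurlyeq r'$ implies $\mu r\trianglelefteq\mu r'$. *)

(* Defs.v *)
From Stdlib Require Import ClassicalEpsilon.
From mathcomp Require Import ssreflect ssrfun ssrbool eqtype ssrnat fintype.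

Set Implicit Arguments.
Unset Strict Implicit.
Unset Printing Implicit Defensive.

Section Trees.

(* Node labels: the operations of the signature Sigma (with their N-parameter,
   if any, folded into the label) together with the sigma_m.
   [ar l = Some n] : l has n children (arity alpha^n);
   [ar l = None]   : l has countably many children (arity alpha^N). *)
Variable L : Type.
Variable ar : L -> option nat.

Definition Ar (l : L) : Type :=
  match ar l with Some n => 'I_n | None => nat end.

CoInductive tree (X : Type) : Type :=
| Bot : tree X
| Leaf : X -> tree X
| Node : forall l : L, (Ar l -> tree X) -> tree X.

Arguments Bot {X}.

CoInductive tle (X : Type) : tree X -> tree X -> Prop :=
| tle_bot t : tle Bot t
| tle_leaf x : tle (Leaf x) (Leaf x)
| tle_node l (k k' : Ar l -> tree X) :
    (forall i, tle (k i) (k' i)) -> tle (Node k) (Node k').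

Definition eta (X : Type) (x : X) : tree X := Leaf x.

CoFixpoint mu (X : Type) (t : tree (tree X)) : tree X :=
  match t with
  | Bot => Bot
  | Leaf s => s
  | Node l k => Node (fun i => mu (k i))
  end.

CoFixpoint restr (X : Type) (P : X -> Prop) (t : tree X) : tree unit :=
  match t with
  | Bot => Bot
  | Leaf x => if excluded_middle_informative (P x) then Leaf tt else Bot
  | Node l k => Node (fun i => restr P (k i))
  end.

Variable M : Type.
Variable sem : M -> tree unit -> Prop.

Definition upwards_closed : Prop :=
  forall (o : M) (t t' : tree unit), tle t t' -> sem o t -> sem o t'.

Definition modal (X : Type) (o : M) (A : X -> Prop) (t : tree X) : Prop :=
  sem o (restr A t).

Definition rimage (X Y : Type) (R : X -> Y -> Prop) (A : X -> Prop) : Y -> Prop :=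
  fun y => exists2 x, A x & R x y.

Definition relator (X Y : Type) (R : X -> Y -> Prop) (t : tree X) (t' : tree Y)
  : Prop :=
  forall (A : X -> Prop) (o : M), modal o A t -> modal o (rimage R A) t'.

Inductive form : Type :=
| FTop : M -> form
| FBot : M -> form
| FOr : forall I : Type, (I -> form) -> form
| FAnd : forall I : Type, (I -> form) -> form.

Fixpoint fsem (phi : form) : tree unit -> Prop :=
  match phi with
  | FTop o => modal o (fun _ : unit => True)
  | FBot o => modal o (fun _ : unit => False)
  | FOr J f => fun t => exists i : J, fsem (f i) t
  | FAnd J f => fun t => forall i : J, fsem (f i) t
  end.

Definition tri_le (t t' : tree unit) : Prop :=
  forall phi : form, fsem phi t -> fsem phi t'.

Definition pre_le (r r' : tree (tree unit)) : Prop :=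
  forall (o : M) (phi : form), modal o (fsem phi) r -> modal o (fsem phi) r'.

Definition decomposable : Prop :=
  forall r r' : tree (tree unit), pre_le r r' -> tri_le (mu r) (mu r').

End Trees.

Arguments Bot {L ar X}.

(* Main.v *)
Require Import Defs.
From Stdlib Require Import ClassicalEpsilon.
From mathcomp Require Import ssreflect ssrfun ssrbool eqtype ssrnat fintype.
Set Implicit Arguments.
Section S.
Variable L : Type. Variable ar : L -> option nat.
Definition frob X (t : tree ar X) : tree ar X :=
  match t with Bot => Bot | Leaf x => Leaf ar x | Node l k => Node k end.
Lemma frob_eq X (t : tree ar X) : t = frob t. Proof. by case: t. Qed.

CoFixpoint tmap X Y (f : X -> Y) (t : tree ar X) : tree ar Y :=
  match t with Bot => Bot | Leaf x => Leaf ar (f x) | Node l k => Node (fun i => tmap f (k i)) end.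

CoFixpoint tle_refl X (t : tree ar X) : tle t t.
Proof. case: t => [|x|l k]; constructor. move=> i; apply: tle_refl. Qed.

CoFixpoint mu_restr_le X (A : X -> Prop) (t : tree ar (tree ar X)) :
  tle (restr A (mu t)) (mu (tmap (restr A) t)).
Proof.
  rewrite (frob_eq (restr A (mu t))) (frob_eq (mu (tmap (restr A) t))).
  case: t => [|s|l k] /=.
  - constructor.
  - rewrite -?frob_eq; apply: tle_refl.
  - constructor => i; apply: mu_restr_le.
Qed.
CoFixpoint mu_restr_ge X (A : X -> Prop) (t : tree ar (tree ar X)) :
  tle (mu (tmap (restr A) t)) (restr A (mu t)).
Proof.
  rewrite (frob_eq (restr A (mu t))) (frob_eq (mu (tmap (restr A) t))).
  case: t => [|s|l k] /=.
  - constructor.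
  - rewrite -?frob_eq; apply: tle_refl.
  - constructor => i; apply: mu_restr_ge.
Qed.

CoFixpoint restr_map_le X Y (f : X -> Y) P (t : tree ar X) :
  tle (restr P (tmap f t)) (restr (fun s => P (f s)) t).
Proof.
  rewrite (frob_eq (restr P (tmap f t))) (frob_eq (restr _ t)).
  case: t => [|s|l k] /=.
  - constructor.
  - apply: tle_refl.
  - constructor => i; apply: restr_map_le.
Qed.

CoFixpoint restr_map_ge X Y (f : X -> Y) P (t : tree ar X) :
  tle (restr (fun s => P (f s)) t) (restr P (tmap f t)).
Proof.
  rewrite (frob_eq (restr P (tmap f t))) (frob_eq (restr _ t)).
  case: t => [|s|l k] /=.
  - constructor.
  - apply: tle_refl.
  - constructor => i; apply: restr_map_ge.
Qed.

CoFixpoint restr_mono X (P Q : X -> Prop) (H : forall x, P x -> Q x) (t : tree ar X) :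
  tle (restr P t) (restr Q t).
Proof.
  rewrite (frob_eq (restr P t)) (frob_eq (restr Q t)).
  case: t => [|s|l k] /=.
  - constructor.
  - case: excluded_middle_informative => p; case: excluded_middle_informative => q;
      try constructor. by case: q; apply: H.
  - constructor => i; apply: restr_mono H _.
Qed.

CoFixpoint rr_le X (A Q : X -> Prop) (P : unit -> Prop)
  (H : forall x, A x -> P tt -> Q x) (t : tree ar X) :
  tle (restr P (restr A t)) (restr Q t).
Proof.
  rewrite (frob_eq (restr P (restr A t))) (frob_eq (restr Q t)).
  case: t => [|s|l k] /=.
  - constructor.
  - case: excluded_middle_informative => a /=; rewrite /=.
    + case: excluded_middle_informative => p; case: excluded_middle_informative => q;
        try constructor. by case: q; apply: H.
    + constructor.
  - constructor => i; apply: rr_le H _.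
Qed.
CoFixpoint rr_ge X (A Q : X -> Prop) (P : unit -> Prop)
  (H : forall x, Q x -> A x /\ P tt) (t : tree ar X) :
  tle (restr Q t) (restr P (restr A t)).
Proof.
  rewrite (frob_eq (restr P (restr A t))) (frob_eq (restr Q t)).
  case: t => [|s|l k] /=.
  - constructor.
  - case: excluded_middle_informative => q /=.
    + have [a p] := H _ q.
      case: excluded_middle_informative => // a' /=.
      case: excluded_middle_informative => // p' /=; constructor.
    + constructor.
  - constructor => i; apply: rr_ge H _.
Qed.

CoFixpoint unit_le (P : unit -> Prop) (t : tree ar unit) : tle (restr P t) t.
Proof.
  rewrite (frob_eq (restr P t)) (frob_eq t).
  case: t => [|[]|l k] /=.
  - constructor.
  - case: excluded_middle_informative => q /=; constructor.
  - constructor => i; apply: unit_le.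
Qed.

CoFixpoint unit_ge (P : unit -> Prop) (Hp : P tt) (t : tree ar unit) : tle t (restr P t).
Proof.
  rewrite (frob_eq (restr P t)) (frob_eq t).
  case: t => [|[]|l k] /=.
  - constructor.
  - case: excluded_middle_informative => q //=; constructor.
  - constructor => i; apply: unit_ge Hp _.
Qed.
End S.

Theorem lemma5p8 (L : Type) (ar : L -> option nat)
  (M : Type) (sem : M -> tree ar unit -> Prop)
  (Hup : upwards_closed sem) (Hdec : decomposable sem)
  (X Y : Type) (R : X -> Y -> Prop) :
  (forall (x : X) (y : Y), R x y -> relator sem R (eta ar x) (eta ar y)) /\
  (forall (t : tree ar (tree ar X)) (r : tree ar (tree ar Y)),
      relator sem (relator sem R) t r -> relator sem R (mu t) (mu r)).
Proof.
have up : forall o a b, tle a b -> sem o a -> sem o b := Hup.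
split.
- move=> x y Rxy A o; rewrite /modal => H; apply: up H.
  rewrite /eta (frob_eq (restr A _)) (frob_eq (restr _ (Leaf ar y))) /=.
  case: excluded_middle_informative => a /=; last by constructor.
  case: excluded_middle_informative => b /=; first by constructor.
  by case: b; exists x.
- move=> t r Ht A o; rewrite /modal => H.
  pose RA := rimage R A.
  have key : forall (phi : form M) s u, relator sem R s u ->
      fsem sem phi (restr A s) -> fsem sem phi (restr RA u).
  { elim=> [o'|o'|I f IH|I f IH] s u Hsu /=.
    - rewrite /modal => H1.
      apply: (up _ (restr RA u)); first exact: unit_ge.
      apply: Hsu. apply: up H1; exact: rr_le.
    - rewrite /modal => H1.
      apply: (up _ (restr (rimage R (fun _ => False)) u)).
        by apply: rr_ge => y [x []].
      apply: Hsu. apply: up H1; exact: rr_le.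
    - move=> [i Hi]; exists i; exact: IH Hsu Hi.
    - move=> Hi i; exact: IH Hsu (Hi i). }
  have Hpre : pre_le sem (tmap (restr A) t) (tmap (restr RA) r).
  { move=> o' phi; rewrite /modal => H1.
    apply: (up _ (restr (fun s => fsem sem phi (restr RA s)) r)); first exact: restr_map_ge.
    apply: (up _ (restr (rimage (relator sem R) (fun s => fsem sem phi (restr A s))) r)).
      by apply: restr_mono => u [s Hs Hsu]; apply: key Hsu Hs.
    apply: Ht; rewrite /modal; apply: up H1; apply: restr_map_le. }
  have := Hdec _ _ Hpre (FTop o) => /=.
  rewrite /modal => H2.
  have H3 : sem o (restr (fun _ => True) (mu (tmap (restr RA) r))).
    apply: H2. apply: (up _ (mu (tmap (restr A) t))); first exact: unit_ge.
    apply: up H; exact: mu_restr_le.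
  apply: (up _ (mu (tmap (restr RA) r))); first exact: mu_restr_ge.
  apply: up H3; exact: unit_le.
Qed.
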